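(* Let $R$ be a commutative ring and $r\ge2$. Let $b^+=(b_1,\ldots,b_r)^t\in R^r$ be a unimodular column and let $b^-=(b_{-r},\ldots,b_{-1})^t\in R^r$ be a column such that $\sum_{i=1}^rb_ib_{-i}=0$. Then there exists $M\in\Theta(r,R)$ such that $b^-=Mb^+$.
   Context: A column is unimodular if its entries generate the unit ideal. For an $r\times r$ matrix $g$ with rows and columns indexed $1,\ldots,r$, its antidiagonal transpose $g^{\tau}$ has entries $(g^\tau)_{i,j}=g_{r+1-j,r+1-i}$. $\Theta(r,R)$ is the set of $r\times r$ matrices $M$ over $R$ with $M^{\tau}=-M$ and all antidiagonal entries $M_{i,r+1-i}$ equal to zero. Note the entries of $b^-$ are listed in the order $b_{-r},\ldots,b_{-1}$. *)

(* Defs.v *)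
From mathcomp Require Import all_boot all_order all_algebra.
Set Implicit Arguments. Unset Strict Implicit. Unset Printing Implicit Defensive.
Import GRing.Theory.
Local Open Scope ring_scope.

(* Indices are 0-based: paper index k in 1..r corresponds to ordinal k-1;
   paper index r+1-k corresponds to rev_ord. *)

Definition unimodular (R : comRingType) (r : nat) (b : 'cV[R]_r) : Prop :=
  exists c : 'rV[R]_r, \sum_(i < r) c 0 i * b i 0 = 1.

(* antidiagonal transpose: (g^tau)_{i,j} = g_{r+1-j, r+1-i} *)
Definition adtr (R : Type) (r : nat) (g : 'M[R]_r) : 'M[R]_r :=
  \matrix_(i, j) g (rev_ord j) (rev_ord i).

Definition Theta (R : comRingType) (r : nat) (M : 'M[R]_r) : Prop :=
  adtr M = - M /\ forall i : 'I_r, M i (rev_ord i) = 0.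

(* Main.v *)
Require Import Defs.
From mathcomp Require Import all_boot all_order all_algebra.
From mathcomp Require Import ring.
Import GRing.Theory.
Local Open Scope ring_scope.

Theorem lemma9 (R : comRingType) (r : nat) (hr : (2 <= r)%N)
  (bp bm : 'cV[R]_r) :
  unimodular bp ->
  \sum_(i < r) bp i 0 * bm (rev_ord i) 0 = 0 ->
  exists M : 'M[R]_r, Theta M /\ bm = M *m bp.
Proof.
move=> [c hc] hs.
exists (\matrix_(i, j) (bm i 0 * c 0 j - c 0 (rev_ord i) * bm (rev_ord j) 0)).
split; first split.
- apply/matrixP => i j; rewrite /adtr !mxE !rev_ordK.
  rewrite opprB; ring.
- by move=> i; rewrite mxE rev_ordK mulrC subrr.
- apply/matrixP => i k; rewrite ord1 !mxE.
  under eq_bigr => j _ do rewrite mxE mulrBl.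
  rewrite sumrB.
  under eq_bigr => j _ do rewrite -mulrA.
  under [X in _ - X]eq_bigr => j _ do rewrite -mulrA.
  rewrite -!mulr_sumr.
  have -> : \sum_(j < r) c 0 j * bp j 0 = 1 by [].
  have -> : \sum_(j < r) bm (rev_ord j) 0 * bp j 0 = 0.
    by rewrite -[RHS]hs; apply: eq_bigr => j _; rewrite mulrC.
  by rewrite mulr0 mulr1 subr0.
Qed.
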